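(* Let $T$ be an anonymous and reasonable cardinal comparison test. If $T\not\sim\mathcal D$, then $T$ is not error-free. (In fact, if $T\not\sim_{\vec f}\mathcal D$ for a pair $\vec f$, then $T$ violates error-freeness.)
   Context: Let $\Omega=\{0,1\}$, $\Omega^\infty$ the set of infinite sequences $\omega=(\omega_1,\omega_2,\dots)$, and $\omega^t=(\omega_1,\dots,\omega_t)$ (also used for the cylinder set of all sequences with this prefix; $\omega^0=\emptyset$). $\mathcal G_t$ is the $\sigma$-algebra generated by the length-$t$ cylinders and $\mathcal G_\infty$ the $\sigma$-algebra generated by all cylinders. $\Delta(\Omega)$ is the set of probability distributions on $\Omega$; for $p\in\Delta(\Omega)$ and $x\in\Omega$, $p[x]$ is the probability of $x$. A forecasting strategy is a map $f:\bigcup_{t\ge0}(\Omega\times\Delta(\Omega)\times\Delta(\Omega))^t\to\Delta(\Omega)$; $F$ is the set of all forecasting strategies. Given an ordered pair $\vec f=(f,g)\in F\times F$ and $\omega\in\Omega^\infty$, the play path $(\omega,\vec f)$ is defined recursively: $(\omega,\vec f)^0=\emptyset$ and its $t$-th entry is $(\omega_t,f((\omega,\vec f)^{t-1}),g((\omega,\vec f)^{t-1}))$. The pair $\vec f$ induces two probability measures on $(\Omega^\infty,\mathcal G_\infty)$, again denoted $f$ and $g$, determined by $f(\omega^t)=\prod_{n=1}^t f((\omega,\vec f)^{n-1})[\omega_n]$ and $g(\omega^t)=\prod_{n=1}^t g((\omega,\vec f)^{n-1})[\omega_n]$. A (cardinal comparison) test is a sequence $T=(T_t)_{t>0}$ of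 $\mathcal G_t$-measurable functions $T_t:(\Omega\times\Delta(\Omega)\times\Delta(\Omega))^\infty\to[0,1]$; write $T_t(\omega,\vec f)=T_t((\omega,\vec f))$ and $T(\omega,\vec f)=\lim_t T_t(\omega,\vec f)$ whenever the limit exists. For $\epsilon\in(0,1)$ let $L^{\vec f}_{T,\epsilon}=\{\omega:T(\omega,\vec f)\text{ exists and }>\epsilon\}$ and $R^{\vec f}_{T,\epsilon}=\{\omega:T(\omega,\vec f)\text{ exists and }<\epsilon\}$. $T$ is anonymous if $T_t(\omega,f,g)=1-T_t(\omega,g,f)$ for all $\omega$, $t>0$, $f,g\in F$. $T$ is error-free if for all $\vec f=(f,g)$ and measurable $A\subseteq\Omega^\infty$: for all $\epsilon\in(0,\frac12)$, $f(A\cap R^{\vec f}_{T,\epsilon})\le\frac{\epsilon}{1-\epsilon}g(A\cap R^{\vec f}_{T,\epsilon})$, and for all $\epsilon\in(\frac12,1)$, $g(A\cap L^{\vec f}_{T,\epsilon})\le\frac{1-\epsilon}{\epsilon}f(A\cap L^{\vec f}_{T,\epsilon})$. $T$ is reasonable if for all $\vec f=(f,g)$ and measurable $A$: for $\epsilon\in(0,\frac12)$, if $g(A)>0$ and $f(A)<\frac{\epsilon}{1-\epsilon}g(A)$ then $g(A\cap R^{\vec f}_{T,\epsilon})>0$; and for $\epsilon\in(\frac12,1)$, if $f(A)>0$ and $g(A)<\frac{1-\epsilon}{\epsilon}f(A)$ then $f(A\cap L^{\vec f}_{T,\epsilon})>0$. The finite derivative test $\mathcal D$: for $t\ge0$,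 $\mathcal D_{t+1}(\omega,\vec f)=\frac{f(\omega^t)}{f(\omega^t)+g(\omega^t)}$ if $f(\omega^t)>0$ or $g(\omega^t)>0$, and $\frac12$ otherwise. Equivalence: $T\sim_{\vec f}\hat T$ if $f(N)=g(N)=0$ where $N=\{\omega: T(\omega,\vec f),\hat T(\omega,\vec f)\text{ both exist and differ}\}$; $T\sim\hat T$ if $T\sim_{\vec f}\hat T$ for all $\vec f\in F\times F$. *)

(* Defs.v *)
From Stdlib Require Import Reals Lra List ClassicalEpsilon.
Import ListNotations.
Open Scope R_scope.

(* Omega = {0,1} is bool (true = 1).  Infinite outcome sequences are
   nat -> bool with omega_{n+1} = w n. *)
Definition Seq := nat -> bool.

(* Delta(Omega): a distribution on {0,1}, given by the probability of 1. *)
Definition Dist := { p : R | 0 <= p <= 1 }.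
Definition prob (p : Dist) (x : bool) : R :=
  if x then proj1_sig p else 1 - proj1_sig p.

(* An entry of a play path: (omega_t, forecast of f, forecast of g). *)
Definition Entry := (bool * Dist * Dist)%type.
Definition History := list Entry.

Definition Strategy := History -> Dist.

Fixpoint play (f g : Strategy) (w : Seq) (t : nat) : History :=
  match t with
  | O => []
  | S n => let h := play f g w n in h ++ [(w n, f h, g h)]
  end.

(* Probability product along a history, using the forecasts of the first
   (sel = true) or second (sel = false) forecaster. *)
Definition wprod (sel : bool) (h : History) : R :=
  fold_right (fun e acc =>
    prob (if sel then snd (fst e) else snd e) (fst (fst e)) * acc) 1 h.

Definition in_cyl (w : Seq) (t : nat) (w' : Seq) : Prop :=
  forall n, (n < t)%nat -> w' n = w n.

(* Measure of the cylinder w^t under the measure induced by f (sel=true)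
   or g (sel=false) of the pair (f,g). *)
Definition cyl_weight (sel : bool) (f g : Strategy) (w : Seq) (t : nat) : R :=
  wprod sel (play f g w t).

Inductive measurable : (Seq -> Prop) -> Prop :=
  | meas_cyl : forall w t, measurable (in_cyl w t)
  | meas_compl : forall A, measurable A -> measurable (fun x => ~ A x)
  | meas_union : forall (A : nat -> Seq -> Prop),
      (forall k, measurable (A k)) -> measurable (fun x => exists k, A k x)
  | meas_ext : forall A B, (forall x, A x <-> B x) -> measurable A -> measurable B.

(* Countable cylinder covers (None = empty piece). *)
Definition piece_weight (sel : bool) (f g : Strategy)
  (c : option (Seq * nat)) : R :=
  match c with None => 0 | Some (w, t) => cyl_weight sel f g w t end.

Definition in_piece (c : option (Seq * nat)) (x : Seq) : Prop :=
  match c with None => False | Some (w, t) => in_cyl w t x end.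

Definition cover_sums (sel : bool) (f g : Strategy) (A : Seq -> Prop) (s : R)
  : Prop :=
  exists c : nat -> option (Seq * nat),
    (forall x, A x -> exists k, in_piece (c k) x) /\
    infinite_sum (fun k => piece_weight sel f g (c k)) s.

Definition is_glb (E : R -> Prop) (m : R) : Prop :=
  (forall x, E x -> m <= x) /\ (forall b, (forall x, E x -> b <= x) -> b <= m).

(* The measure induced by (f,g) (first or second forecaster), obtained by the
   Caratheodory (outer measure) extension of the cylinder weights; on
   measurable sets this is the unique measure determined by the cylinder
   probabilities. *)
Definition meas (sel : bool) (f g : Strategy) (A : Seq -> Prop) : R :=
  epsilon (inhabits 0) (fun m => is_glb (cover_sums sel f g A) m).

(* Cardinal comparison tests: T t h is T_t evaluated on a play path whose
   length-t prefix is h (G_t-measurability = dependence on the length-t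
   prefix only). *)
Definition Test := nat -> History -> R.

Definition is_test (T : Test) : Prop :=
  forall t h, (0 < t)%nat -> 0 <= T t h <= 1.

Definition Tval (T : Test) (f g : Strategy) (w : Seq) (t : nat) : R :=
  T t (play f g w t).

Definition has_lim (T : Test) (f g : Strategy) (w : Seq) (l : R) : Prop :=
  Un_cv (fun t => Tval T f g w t) l.

Definition Lset (T : Test) (f g : Strategy) (eps : R) (w : Seq) : Prop :=
  exists l, has_lim T f g w l /\ l > eps.
Definition Rset (T : Test) (f g : Strategy) (eps : R) (w : Seq) : Prop :=
  exists l, has_lim T f g w l /\ l < eps.

Definition anonymous (T : Test) : Prop :=
  forall (w : Seq) (t : nat) (f g : Strategy), (0 < t)%nat ->
    Tval T f g w t = 1 - Tval T g f w t.

Definition error_free (T : Test) : Prop :=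
  forall (f g : Strategy) (A : Seq -> Prop), measurable A ->
    (forall eps, 0 < eps < 1/2 ->
       meas true f g (fun x => A x /\ Rset T f g eps x)
       <= eps / (1 - eps) * meas false f g (fun x => A x /\ Rset T f g eps x)) /\
    (forall eps, 1/2 < eps < 1 ->
       meas false f g (fun x => A x /\ Lset T f g eps x)
       <= (1 - eps) / eps * meas true f g (fun x => A x /\ Lset T f g eps x)).

Definition reasonable (T : Test) : Prop :=
  forall (f g : Strategy) (A : Seq -> Prop), measurable A ->
    (forall eps, 0 < eps < 1/2 ->
       meas false f g A > 0 ->
       meas true f g A < eps / (1 - eps) * meas false f g A ->
       meas false f g (fun x => A x /\ Rset T f g eps x) > 0) /\
    (forall eps, 1/2 < eps < 1 ->
       meas true f g A > 0 ->
       meas false f g A < (1 - eps) / eps * meas true f g A ->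
       meas true f g (fun x => A x /\ Lset T f g eps x) > 0).

(* The finite derivative test D: D_{t+1} = f(omega^t)/(f(omega^t)+g(omega^t)),
   where f(omega^t), g(omega^t) are computed from the first t entries of the
   play path. *)
Definition Dtest : Test := fun t h =>
  match t with
  | O => 1/2
  | S n =>
      let pf := wprod true (firstn n h) in
      let pg := wprod false (firstn n h) in
      if Rlt_dec 0 pf then pf / (pf + pg)
      else if Rlt_dec 0 pg then pf / (pf + pg) else 1/2
  end.

Definition equiv_pair (T T' : Test) (f g : Strategy) : Prop :=
  let N := fun w => exists l l', has_lim T f g w l /\ has_lim T' f g w l' /\ l <> l' in
  meas true f g N = 0 /\ meas false f g N = 0.

Definition equiv (T T' : Test) : Prop :=
  forall f g : Strategy, equiv_pair T T' f g.

(* Main.v *)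
Require Import Defs.
From Stdlib Require Import Reals Lra Lia List ClassicalEpsilon Classical.
Import ListNotations.
Open Scope R_scope.

Definition agree (t : nat) (u v : Seq) : Prop := forall n, (n < t)%nat -> u n = v n.

Lemma prob_range : forall p x, 0 <= prob p x <= 1.
Proof. intros [q Hq] x; destruct x; simpl; lra. Qed.

Lemma prob_sum : forall p, prob p false + prob p true = 1.
Proof. intros [q Hq]; simpl; lra. Qed.

Lemma play_length : forall f g w t, length (play f g w t) = t.
Proof. induction t; simpl; auto. rewrite length_app, IHt; simpl; lia. Qed.

Lemma play_agree : forall f g w w' t, agree t w w' -> play f g w t = play f g w' t.
Proof.
  induction t; intros H; simpl; auto.
  rewrite IHt. rewrite (H t) by lia. reflexivity.
  intros n Hn; apply H; lia.
Qed.

Lemma wprod_app : forall sel h e,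
  wprod sel (h ++ [e]) = wprod sel h * prob (if sel then snd (fst e) else snd e) (fst (fst e)).
Proof. intros sel h e; unfold wprod; induction h; simpl. ring. rewrite IHh; ring. Qed.

Lemma wprod_nonneg : forall sel h, 0 <= wprod sel h.
Proof.
  intros sel h; induction h; simpl. lra.
  apply Rmult_le_pos; auto. apply prob_range.
Qed.

Lemma cw_nonneg : forall s f g w t, 0 <= cyl_weight s f g w t.
Proof. intros; apply wprod_nonneg. Qed.

Lemma cw_S : forall s f g w t, cyl_weight s f g w (S t) =
  cyl_weight s f g w t * prob (if s then f (play f g w t) else g (play f g w t)) (w t).
Proof.
  intros; unfold cyl_weight; simpl play. rewrite wprod_app. simpl. destruct s; reflexivity.
Qed.

Lemma cw_agree : forall s f g w w' t, agree t w w' -> cyl_weight s f g w t = cyl_weight s f g w' t.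
Proof. intros; unfold cyl_weight; rewrite (play_agree f g w w' t); auto. Qed.

Lemma cw_0 : forall s f g w, cyl_weight s f g w 0 = 1.
Proof. intros; reflexivity. Qed.

Definition upd (u : Seq) (L : nat) (b : bool) : Seq := fun n => if Nat.eqb n L then b else u n.

Fixpoint words (L : nat) : list Seq :=
  match L with
  | O => [fun _ => false]
  | S L' => flat_map (fun u => [upd u L' false; upd u L' true]) (words L')
  end.

Definition sumL {A} (l : list A) (F : A -> R) : R := fold_right (fun u acc => F u + acc) 0 l.

Lemma sumL_ext : forall A (l : list A) F G, (forall u, F u = G u) -> sumL l F = sumL l G.
Proof. intros A l F G H; induction l; simpl; auto. rewrite H, IHl; auto. Qed.

Lemma sumL_le : forall A (l : list A) F G, (forall u, F u <= G u) -> sumL l F <= sumL l G.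
Proof. intros A l F G H; induction l; simpl. lra. specialize (H a); lra. Qed.

Lemma sumL_nonneg : forall A (l : list A) F, (forall u, 0 <= F u) -> 0 <= sumL l F.
Proof. intros A l F H; induction l; simpl. lra. specialize (H a); lra. Qed.

Lemma sumL_plus : forall A (l : list A) F G, sumL l (fun u => F u + G u) = sumL l F + sumL l G.
Proof. intros A l F G; induction l; simpl. ring. rewrite IHl; ring. Qed.

Lemma sumL_app : forall A (l l' : list A) F, sumL (l ++ l') F = sumL l F + sumL l' F.
Proof. intros A l l' F; induction l; simpl. ring. rewrite IHl; ring. Qed.

Lemma sumL_flat2 : forall (l : list Seq) (a b : Seq -> Seq) F,
  sumL (flat_map (fun u => [a u; b u]) l) F = sumL l (fun u => F (a u) + F (b u)).
Proof.
  intros l a b F; induction l; simpl. auto.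
  rewrite <- IHl. unfold sumL; simpl. ring.
Qed.

Definition ind (P : Seq -> Prop) (u : Seq) : R :=
  if excluded_middle_informative (P u) then 1 else 0.

Lemma upd_agree : forall u L b, agree L (upd u L b) u.
Proof.
  intros u L b n Hn; unfold upd. destruct (Nat.eqb_spec n L); [lia | auto].
Qed.

Lemma agree_sym : forall t u v, agree t u v -> agree t v u.
Proof. intros t u v H n Hn; symmetry; auto. Qed.

Lemma agree_trans : forall t u v w, agree t u v -> agree t v w -> agree t u w.
Proof. intros t u v w H1 H2 n Hn; rewrite H1; auto. Qed.

Lemma agree_le : forall t t' u v, (t' <= t)%nat -> agree t u v -> agree t' u v.
Proof. intros t t' u v Hle H n Hn; apply H; lia. Qed.

Lemma count_cyl : forall t v (G : Seq -> R),
  (forall u u', agree t u u' -> G u = G u') ->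
  sumL (words t) (fun u => ind (in_cyl v t) u * G u) = G v.
Proof.
  induction t; intros v G HG.
  - simpl. unfold ind. destruct (excluded_middle_informative _) as [_|Hn].
    + rewrite (HG _ v). ring. intros n Hn; lia.
    + exfalso; apply Hn; intros n Hn'; lia.
  - simpl words. rewrite sumL_flat2.
    rewrite (sumL_ext _ _ _ (fun u => ind (in_cyl v t) u * G (upd u t (v t)))).
    + rewrite IHt.
      * apply HG. intros n Hn. unfold upd. destruct (Nat.eqb_spec n t); subst; auto.
      * intros u u' Hu. apply HG. intros n Hn. unfold upd.
        destruct (Nat.eqb_spec n t); auto. apply Hu; lia.
    + intros u. unfold ind.
      destruct (excluded_middle_informative (in_cyl v t u)) as [Hc|Hc].
      * destruct (excluded_middle_informative (in_cyl v (S t) (upd u t false))) as [H0|H0];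
        destruct (excluded_middle_informative (in_cyl v (S t) (upd u t true))) as [H1|H1].
        -- exfalso. specialize (H0 t); specialize (H1 t). unfold upd in *.
           rewrite Nat.eqb_refl in *. assert (false = true) by (rewrite H0, H1; lia || auto). discriminate.
        -- specialize (H0 t). unfold upd in H0. rewrite Nat.eqb_refl in H0. rewrite <- H0 by lia. ring.
        -- specialize (H1 t). unfold upd in H1. rewrite Nat.eqb_refl in H1. rewrite <- H1 by lia. ring.
        -- exfalso. destruct (v t) eqn:E.
           ++ apply H1. intros n Hn. unfold upd. destruct (Nat.eqb_spec n t); subst; auto. apply Hc; lia.
           ++ apply H0. intros n Hn. unfold upd. destruct (Nat.eqb_spec n t); subst; auto. apply Hc; lia.
      * destruct (excluded_middle_informative (in_cyl v (S t) (upd u t false))) as [H0|H0].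
        { exfalso; apply Hc; intros n Hn. rewrite <- (upd_agree u t false n Hn). apply H0; lia. }
        destruct (excluded_middle_informative (in_cyl v (S t) (upd u t true))) as [H1|H1].
        { exfalso; apply Hc; intros n Hn. rewrite <- (upd_agree u t true n Hn). apply H1; lia. }
        ring.
Qed.
Definition mu (s : bool) (f g : Strategy) (L : nat) (P : Seq -> Prop) : R :=
  sumL (words L) (fun u => ind P u * cyl_weight s f g u L).

Lemma cw_upd : forall s f g u L b,
  cyl_weight s f g (upd u L b) (S L) =
  cyl_weight s f g u L * prob (if s then f (play f g u L) else g (play f g u L)) b.
Proof.
  intros. rewrite cw_S. rewrite (play_agree f g (upd u L b) u L) by apply upd_agree.
  rewrite (cw_agree s f g (upd u L b) u L) by apply upd_agree.
  replace (upd u L b L) with b by (unfold upd; now rewrite Nat.eqb_refl). reflexivity.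
Qed.

Lemma ind_agree : forall P L u u', (forall u u', agree L u u' -> P u -> P u') ->
  agree L u u' -> ind P u = ind P u'.
Proof.
  intros P L u u' HP H. unfold ind.
  destruct (excluded_middle_informative (P u)); destruct (excluded_middle_informative (P u')); auto.
  - exfalso; eauto.
  - exfalso. apply n. eapply HP; [apply agree_sym; eauto| auto].
Qed.

Lemma mu_step : forall s f g L P, (forall u u', agree L u u' -> P u -> P u') ->
  mu s f g (S L) P = mu s f g L P.
Proof.
  intros s f g L P HP. unfold mu. simpl words. rewrite sumL_flat2. apply sumL_ext. intros u.
  rewrite !cw_upd. rewrite !(ind_agree P L (upd u L _) u HP (upd_agree _ _ _)).
  pose proof (prob_sum (if s then f (play f g u L) else g (play f g u L))). 
  replace (ind P u * cyl_weight s f g u L) with (ind P u * cyl_weight s f g u L * 1) by ring.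
  rewrite <- H. ring.
Qed.

Lemma mu_cyl : forall s f g v t L, (t <= L)%nat -> mu s f g L (in_cyl v t) = cyl_weight s f g v t.
Proof.
  intros s f g v t L Hle. replace L with (t + (L - t))%nat by lia.
  generalize (L - t)%nat as k. induction k.
  - rewrite Nat.add_0_r. unfold mu.
    apply count_cyl. intros; apply cw_agree; auto.
  - replace (t + S k)%nat with (S (t + k)) by lia. rewrite mu_step; auto.
    intros u u' H Hu n Hn. rewrite <- H by lia. auto.
Qed.

Lemma ind_range : forall P u, 0 <= ind P u <= 1.
Proof. intros; unfold ind; destruct (excluded_middle_informative _); lra. Qed.

Lemma mu_le : forall s f g L (P Q : Seq -> Prop), (forall u, P u -> Q u) -> mu s f g L P <= mu s f g L Q.
Proof.
  intros. unfold mu. apply sumL_le. intros u. apply Rmult_le_compat_r. apply cw_nonneg.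
  unfold ind. destruct (excluded_middle_informative (P u)); destruct (excluded_middle_informative (Q u)); try lra.
  exfalso; auto.
Qed.

Lemma mu_nonneg : forall s f g L P, 0 <= mu s f g L P.
Proof.
  intros. unfold mu. apply sumL_nonneg. intros u. apply Rmult_le_pos. apply ind_range. apply cw_nonneg.
Qed.

Lemma mu_false : forall s f g L (P : Seq -> Prop), (forall u, ~ P u) -> mu s f g L P = 0.
Proof.
  intros. unfold mu. transitivity (sumL (words L) (fun _ : Seq => 0)).
  - apply sumL_ext. intros u. unfold ind. destruct (excluded_middle_informative (P u)) as [Hp|Hp]. exfalso; eapply H; eauto. ring.
  - induction (words L); simpl; auto. rewrite IHl; ring.
Qed.

Lemma mu_union_le : forall s f g L (P Q : Seq -> Prop),
  mu s f g L (fun u => P u \/ Q u) <= mu s f g L P + mu s f g L Q.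
Proof.
  intros. unfold mu. rewrite <- sumL_plus. apply sumL_le. intros u.
  pose proof (cw_nonneg s f g u L).
  unfold ind. destruct (excluded_middle_informative (P u)); destruct (excluded_middle_informative (Q u));
  destruct (excluded_middle_informative (P u \/ Q u)); try lra. exfalso; tauto.
Qed.

Lemma mu_union_disj : forall s f g L (P Q : Seq -> Prop), (forall u, P u -> Q u -> False) ->
  mu s f g L (fun u => P u \/ Q u) = mu s f g L P + mu s f g L Q.
Proof.
  intros. unfold mu. rewrite <- sumL_plus. apply sumL_ext. intros u.
  unfold ind. destruct (excluded_middle_informative (P u)); destruct (excluded_middle_informative (Q u));
  destruct (excluded_middle_informative (P u \/ Q u)); try lra; exfalso; eauto; tauto.
Qed.

Lemma mu_ext : forall s f g L (P Q : Seq -> Prop), (forall u, P u <-> Q u) -> mu s f g L P = mu s f g L Q.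
Proof.
  intros. apply Rle_antisym; apply mu_le; firstorder.
Qed.

Fixpoint fsum (F : nat -> R) (N : nat) : R :=
  match N with O => 0 | S n => fsum F n + F n end.

Lemma fsum_ext : forall F G N, (forall n, (n < N)%nat -> F n = G n) -> fsum F N = fsum G N.
Proof. intros F G N H; induction N; simpl; auto. rewrite IHN, H; auto. Qed.

Lemma fsum_le : forall F G N, (forall n, (n < N)%nat -> F n <= G n) -> fsum F N <= fsum G N.
Proof. intros F G N H; induction N; simpl. lra. assert (F N <= G N) by auto. assert (fsum F N <= fsum G N) by auto. lra. Qed.

Lemma fsum_nonneg : forall F N, (forall n, 0 <= F n) -> 0 <= fsum F N.
Proof. intros F N H; induction N; simpl. lra. specialize (H N); lra. Qed.

Lemma fsum_mono : forall F N M, (forall n, 0 <= F n) -> (N <= M)%nat -> fsum F N <= fsum F M.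
Proof. intros F N M H Hle; induction Hle; simpl. lra. specialize (H m); lra. Qed.

Lemma fsum_sum_f : forall F N, sum_f_R0 F N = fsum F (S N).
Proof. intros F N; induction N; simpl. ring. rewrite IHN. simpl. ring. Qed.

Lemma fsum_scal : forall F c N, fsum (fun n => c * F n) N = c * fsum F N.
Proof. intros; induction N; simpl. ring. rewrite IHN; ring. Qed.

Lemma sumL_ext_in : forall A (l : list A) F G, (forall u, In u l -> F u = G u) -> sumL l F = sumL l G.
Proof. intros A l F G H; induction l; simpl; auto. rewrite H, IHl; auto. intros; apply H; simpl; auto. simpl; auto. Qed.

Definition in_pieces (c : nat -> option (Seq * nat)) (N : nat) (x : Seq) : Prop :=
  exists n, (n < N)%nat /\ in_piece (c n) x.

Lemma mu_pieces : forall s f g L c N,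
  (forall n n' x, (n < N)%nat -> (n' < N)%nat -> n <> n' -> in_piece (c n) x -> in_piece (c n') x -> False) ->
  mu s f g L (in_pieces c N) = fsum (fun n => mu s f g L (in_piece (c n))) N.
Proof.
  intros s f g L c N; induction N; intros Hd; simpl.
  - apply mu_false. intros u [n [Hn _]]; lia.
  - rewrite <- IHN.
    + rewrite <- mu_union_disj.
      * apply mu_ext. intros u; split.
        -- intros [n [Hn Hp]]. destruct (Nat.eq_dec n N); subst; [right|left]; auto. exists n; split; auto; lia.
        -- intros [[n [Hn Hp]]|Hp]; [exists n|exists N]; split; auto; lia.
      * intros u [n [Hn Hp]] Hq. apply (Hd n N u); auto; lia.
    + intros n n' x Hn Hn' Hne Hx Hx'; apply (Hd n n' x); auto; lia.
Qed.

Definition in_list (Cs : list (Seq * nat)) (x : Seq) : Prop :=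
  exists C, In C Cs /\ in_cyl (fst C) (snd C) x.

Lemma mu_list_le : forall s f g L Cs,
  mu s f g L (in_list Cs) <= sumL Cs (fun C => mu s f g L (in_cyl (fst C) (snd C))).
Proof.
  intros s f g L Cs; induction Cs; simpl.
  - rewrite mu_false. lra. intros u [C [[] _]].
  - eapply Rle_trans; [|apply Rplus_le_compat_l; apply IHCs].
    eapply Rle_trans; [|apply mu_union_le].
    apply mu_le. intros u [C [[HC|HC] Hu]]; [left; subst; auto|right; exists C; auto].
Qed.

Lemma exL_pieces : forall (c : nat -> option (Seq * nat)) N, exists L,
  forall n v m, (n < N)%nat -> c n = Some (v, m) -> (m <= L)%nat.
Proof.
  intros c N; induction N.
  - exists 0%nat; intros; lia.
  - destruct IHN as [L HL]. destruct (c N) as [[v0 m0]|] eqn:E.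
    + exists (Nat.max L m0). intros n v m Hn Hc. destruct (Nat.eq_dec n N).
      * subst. rewrite E in Hc. inversion Hc; lia.
      * specialize (HL n v m ltac:(lia) Hc); lia.
    + exists L. intros n v m Hn Hc. destruct (Nat.eq_dec n N).
      * subst; congruence.
      * eapply HL; eauto; lia.
Qed.

Lemma exL_list : forall (Cs : list (Seq * nat)), exists L, forall C, In C Cs -> (snd C <= L)%nat.
Proof.
  induction Cs as [|C0 Cs IH]. exists 0%nat; intros C [].
  destruct IH as [L HL]. exists (Nat.max L (snd C0)). intros C [HC|HC]; [subst; lia|]. specialize (HL C HC); lia.
Qed.

Lemma fin_bound : forall s f g (c : nat -> option (Seq * nat)) N Cs,
  (forall n n' x, (n < N)%nat -> (n' < N)%nat -> n <> n' -> in_piece (c n) x -> in_piece (c n') x -> False) ->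
  (forall n v m, (n < N)%nat -> c n = Some (v, m) ->
     exists C, In C Cs /\ forall x, in_cyl v m x -> in_cyl (fst C) (snd C) x) ->
  fsum (fun n => piece_weight s f g (c n)) N <= sumL Cs (fun C => cyl_weight s f g (fst C) (snd C)).
Proof.
  intros s f g c N Cs Hd Hin.
  destruct (exL_pieces c N) as [L1 H1]. destruct (exL_list Cs) as [L2 H2].
  set (L := Nat.max L1 L2).
  rewrite (fsum_ext _ (fun n => mu s f g L (in_piece (c n)))).
  - rewrite <- mu_pieces by auto.
    rewrite (sumL_ext_in _ _ _ (fun C => mu s f g L (in_cyl (fst C) (snd C)))).
    + eapply Rle_trans; [|apply mu_list_le]. apply mu_le.
      intros u [n [Hn Hp]]. destruct (c n) as [[v m]|] eqn:E; [|destruct Hp].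
      destruct (Hin n v m Hn E) as [C [HC HC']]. exists C; split; auto.
    + intros C HC. symmetry. apply mu_cyl. specialize (H2 C HC). lia.
  - intros n Hn. destruct (c n) as [[v m]|] eqn:E; simpl.
    + symmetry; apply mu_cyl. specialize (H1 n v m Hn E); lia.
    + symmetry; apply mu_false; auto.
Qed.
Definition decode (n : nat) : Seq := fun i => Nat.testbit n i.

Lemma code_exists : forall m (w : Seq), exists n, n <> 0%nat /\ Nat.log2 n = m /\
  forall i, (i < m)%nat -> Nat.testbit n i = w i.
Proof.
  induction m; intros w.
  - exists 1%nat; repeat split; auto. intros; lia.
  - destruct (IHm (fun i => w (S i))) as [n [Hn0 [Hl Hb]]].
    destruct (w 0%nat) eqn:E.
    + exists (2 * n + 1)%nat. repeat split. lia. rewrite Nat.log2_succ_double by lia; auto.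
      intros [|i] Hi. rewrite Nat.testbit_odd_0; auto. rewrite Nat.testbit_odd_succ by lia. apply Hb; lia.
    + exists (2 * n)%nat. repeat split. lia. rewrite Nat.log2_double by lia; auto.
      intros [|i] Hi. rewrite Nat.testbit_even_0; auto. rewrite Nat.testbit_even_succ by lia. apply Hb; lia.
Qed.

Lemma code_unique : forall n n', n <> 0%nat -> n' <> 0%nat -> Nat.log2 n = Nat.log2 n' ->
  (forall i, (i < Nat.log2 n)%nat -> Nat.testbit n i = Nat.testbit n' i) -> n = n'.
Proof.
  intros n n' H0 H0' Hl Hb. apply Nat.bits_inj. intros i.
  destruct (Nat.lt_trichotomy i (Nat.log2 n)) as [Hi|[Hi|Hi]].
  - auto.
  - subst. rewrite Nat.bit_log2 by auto. rewrite Hl, Nat.bit_log2; auto.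
  - rewrite !Nat.bits_above_log2; auto. lia.
Qed.

Definition PD (G : Seq -> nat -> Prop) : Prop :=
  forall w w' m, agree m w w' -> G w m -> G w' m.

Definition selc (G : Seq -> nat -> Prop) (n : nat) : Prop :=
  n <> 0%nat /\ G (decode n) (Nat.log2 n) /\ forall k, (k < Nat.log2 n)%nat -> ~ G (decode n) k.

Definition anti (G : Seq -> nat -> Prop) (n : nat) : option (Seq * nat) :=
  if excluded_middle_informative (selc G n) then Some (decode n, Nat.log2 n) else None.

Lemma min_exists : forall (P : nat -> Prop), (exists m, P m) -> exists m, P m /\ forall k, (k < m)%nat -> ~ P k.
Proof.
  intros P [m Hm]. revert Hm. induction m as [m IH] using (well_founded_induction Wf_nat.lt_wf). intros Hm.
  destruct (classic (exists k, (k < m)%nat /\ P k)) as [[k [Hk Pk]]|Hn].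
  - apply (IH k Hk Pk).
  - exists m; split; auto. intros k Hk Pk; apply Hn; eauto.
Qed.

Lemma anti_cover : forall G, PD G -> forall w, (exists m, G w m) -> exists n, in_piece (anti G n) w.
Proof.
  intros G HG w Hex. destruct (min_exists _ Hex) as [m [Hm Hmin]].
  destruct (code_exists m w) as [n [Hn0 [Hl Hb]]].
  exists n. unfold anti. destruct (excluded_middle_informative (selc G n)) as [Hs|Hs].
  - simpl. rewrite Hl. intros i Hi. symmetry. apply Hb; auto.
  - exfalso. apply Hs. split; auto. rewrite Hl. split.
    + eapply HG; [|apply Hm]. intros i Hi. unfold decode. symmetry; auto.
    + intros k Hk HGk. apply (Hmin k Hk). eapply HG; [|apply HGk]. intros i Hi. unfold decode. apply Hb; lia.
Qed.

Lemma anti_some : forall G n v m, anti G n = Some (v, m) -> selc G n /\ v = decode n /\ m = Nat.log2 n.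
Proof.
  intros G n v m. unfold anti. destruct (excluded_middle_informative (selc G n)); intros H; inversion H; auto.
Qed.

Lemma anti_good : forall G n v m, PD G -> anti G n = Some (v, m) -> forall x, in_cyl v m x -> G x m.
Proof.
  intros G n v m HG H x Hx. apply anti_some in H as [[_ [Hs _]] [-> ->]].
  eapply HG; [|apply Hs]. intros i Hi; symmetry; auto.
Qed.

Lemma anti_disj : forall G n n' x, PD G -> n <> n' -> in_piece (anti G n) x -> in_piece (anti G n') x -> False.
Proof.
  intros G n n' x HG Hne H1 H2.
  destruct (anti G n) as [[v m]|] eqn:E1; [|destruct H1].
  destruct (anti G n') as [[v' m']|] eqn:E2; [|destruct H2].
  simpl in H1, H2.
  apply anti_some in E1 as [[Hn0 [Hs Hmin]] [-> ->]].
  apply anti_some in E2 as [[Hn0' [Hs' Hmin']] [-> ->]].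
  assert (Gx : forall k nn, (k <= Nat.log2 nn)%nat -> in_cyl (decode nn) (Nat.log2 nn) x ->
     (G (decode nn) k <-> G x k)).
  { intros k nn Hk Hc; split; intros; (eapply HG; [|eauto]); intros i Hi; [symmetry|]; apply Hc; lia. }
  assert (Nat.log2 n = Nat.log2 n').
  { destruct (Nat.lt_trichotomy (Nat.log2 n) (Nat.log2 n')) as [Hlt|[Heq|Hlt]]; auto; exfalso.
    - apply (Hmin' _ Hlt). apply (Gx (Nat.log2 n) n' ltac:(lia) H2). apply (Gx (Nat.log2 n) n ltac:(lia) H1). auto.
    - apply (Hmin _ Hlt). apply (Gx (Nat.log2 n') n ltac:(lia) H1). apply (Gx (Nat.log2 n') n' ltac:(lia) H2). auto. }
  apply Hne. apply code_unique; auto. intros i Hi.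
  specialize (H1 i Hi). rewrite H in Hi. specialize (H2 i Hi). unfold decode in *. congruence.
Qed.

Lemma cv_le : forall u l M, Un_cv u l -> (forall n, u n <= M) -> l <= M.
Proof.
  intros u l M Hc Hb. destruct (Rle_or_lt l M) as [|Hlt]; auto.
  destruct (Hc (l - M)) as [N HN]. lra. specialize (HN N (Nat.le_refl _)). specialize (Hb N).
  unfold Rdist in HN. apply Rabs_def2 in HN. lra.
Qed.

Lemma cv_ge : forall u l M, Un_cv u l -> (forall n, M <= u n) -> M <= l.
Proof.
  intros u l M Hc Hb. destruct (Rle_or_lt M l) as [|Hlt]; auto.
  destruct (Hc (M - l)) as [N HN]. lra. specialize (HN N (Nat.le_refl _)). specialize (Hb N).
  unfold Rdist in HN. apply Rabs_def2 in HN. lra.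
Qed.

Lemma cv_ev_ge : forall u l M N, Un_cv u l -> (forall n, (N <= n)%nat -> M <= u n) -> M <= l.
Proof.
  intros u l M N Hc Hb. apply (cv_ge (fun n => u (N + n)%nat)). 2: intros; apply Hb; lia.
  intros e He. destruct (Hc e He) as [K HK]. exists K. intros n Hn. apply HK. lia.
Qed.

Lemma cv_ev_le : forall u l M N, Un_cv u l -> (forall n, (N <= n)%nat -> u n <= M) -> l <= M.
Proof.
  intros u l M N Hc Hb. apply (cv_le (fun n => u (N + n)%nat)). 2: intros; apply Hb; lia.
  intros e He. destruct (Hc e He) as [K HK]. exists K. intros n Hn. apply HK. lia.
Qed.

Lemma isum_partial : forall a S, (forall n, 0 <= a n) -> infinite_sum a S -> forall N, fsum a N <= S.
Proof.
  intros a S Ha Hs N. destruct N as [|N]. simpl.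
  - apply (cv_ge (sum_f_R0 a)); auto. intros n; rewrite fsum_sum_f; apply fsum_nonneg; auto.
  - rewrite <- fsum_sum_f. apply (cv_ev_ge (sum_f_R0 a) S _ N); auto.
    intros n Hn. rewrite !fsum_sum_f. apply fsum_mono; auto. lia.
Qed.

Lemma series_bounded : forall a M, (forall n, 0 <= a n) -> (forall N, fsum a N <= M) ->
  exists S, infinite_sum a S /\ S <= M.
Proof.
  intros a M Ha Hb. destruct (growing_cv (sum_f_R0 a)) as [l Hl].
  - intros n. simpl. specialize (Ha (S n)). lra.
  - exists M. intros x [n ->]. rewrite fsum_sum_f; auto.
  - exists l; split; auto. apply (cv_le _ _ _ Hl). intros n; rewrite fsum_sum_f; auto.
Qed.
Lemma pw_nonneg : forall s f g c, 0 <= piece_weight s f g c.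
Proof. intros s f g [[v t]|]; simpl; [apply cw_nonneg|lra]. Qed.

Lemma cover_nonneg : forall s f g A S, cover_sums s f g A S -> 0 <= S.
Proof.
  intros s f g A S [c [_ Hs]]. apply (isum_partial _ _ (fun n => pw_nonneg s f g (c n)) Hs 0).
Qed.

Lemma cover_exists : forall s f g A, exists S, cover_sums s f g A S.
Proof.
  intros. exists 1. exists (fun k => match k with O => Some ((fun _ => false), 0%nat) | S _ => None end).
  split.
  - intros x _. exists 0%nat. simpl. intros n Hn; lia.
  - assert (Hn : forall n, sum_f_R0 (fun k => piece_weight s f g
       (match k with O => Some ((fun _ => false), 0%nat) | S _ => None end)) n = 1).
    { induction n; simpl in *. unfold cyl_weight; simpl; ring. rewrite IHn. ring. }
    intros e He. exists 0%nat. intros n _. rewrite Hn. unfold Rdist. rewrite Rminus_diag, Rabs_R0; lra.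
Qed.

Lemma glb_ex : forall s f g A, exists m, is_glb (cover_sums s f g A) m.
Proof.
  intros s f g A.
  destruct (completeness (fun y => cover_sums s f g A (- y))) as [m [Hub Hlub]].
  - exists 0. intros y Hy. apply cover_nonneg in Hy. lra.
  - destruct (cover_exists s f g A) as [S HS]. exists (- S). rewrite Ropp_involutive; auto.
  - exists (- m). split.
    + intros x Hx. assert (- x <= m). apply Hub. rewrite Ropp_involutive; auto. lra.
    + intros b Hb. assert (m <= - b). apply Hlub. intros y Hy. specialize (Hb _ Hy). lra. lra.
Qed.

Lemma meas_spec : forall s f g A, is_glb (cover_sums s f g A) (meas s f g A).
Proof. intros. unfold meas. apply epsilon_spec. apply glb_ex. Qed.

Lemma meas_le_cover : forall s f g A S, cover_sums s f g A S -> meas s f g A <= S.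
Proof. intros. apply (proj1 (meas_spec s f g A)); auto. Qed.

Lemma meas_ge_lb : forall s f g A b, (forall S, cover_sums s f g A S -> b <= S) -> b <= meas s f g A.
Proof. intros. apply (proj2 (meas_spec s f g A)); auto. Qed.

Lemma meas_nonneg : forall s f g A, 0 <= meas s f g A.
Proof. intros. apply meas_ge_lb. intros; eapply cover_nonneg; eauto. Qed.

Lemma meas_mono : forall s f g (A B : Seq -> Prop), (forall x, A x -> B x) -> meas s f g A <= meas s f g B.
Proof.
  intros. apply meas_ge_lb. intros S [c [Hc Hs]]. apply meas_le_cover. exists c; split; auto.
Qed.

Lemma meas_empty : forall s f g (A : Seq -> Prop), (forall x, ~ A x) -> meas s f g A = 0.
Proof.
  intros. apply Rle_antisym; [|apply meas_nonneg]. apply meas_le_cover.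
  exists (fun _ => None). split. intros x Hx; exfalso; eapply H; eauto.
  assert (Hn : forall n, sum_f_R0 (fun k => piece_weight s f g None) n = 0).
  { induction n; simpl in *; auto. rewrite IHn. ring. }
  intros e He. exists 0%nat. intros n _. rewrite Hn. unfold Rdist. rewrite Rminus_diag, Rabs_R0; lra.
Qed.

Lemma bound_fin : forall (Q : nat -> nat -> Prop) N,
  (forall n K K', (K <= K')%nat -> Q n K -> Q n K') ->
  (forall n, (n < N)%nat -> exists K, Q n K) -> exists K, forall n, (n < N)%nat -> Q n K.
Proof.
  intros Q N Hm; induction N; intros H.
  - exists 0%nat; intros; lia.
  - destruct IHN as [K HK]. intros; apply H; lia.
    destruct (H N ltac:(lia)) as [K' HK'].
    exists (Nat.max K K'). intros n Hn. destruct (Nat.eq_dec n N).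
    + subst. eapply Hm; [|eauto]; lia.
    + eapply Hm; [|apply HK; lia]; lia.
Qed.

Lemma sumL_flat_map : forall A B (h : A -> list B) l F, sumL (flat_map h l) F = sumL l (fun a => sumL (h a) F).
Proof. intros; induction l; simpl; auto. rewrite sumL_app, IHl; auto. Qed.

Lemma sumL_seq : forall n F, sumL (seq 0 n) F = fsum F n.
Proof. induction n; intros F; [reflexivity|]. rewrite seq_S, sumL_app, IHn. simpl. ring. Qed.

Definition somes (c : nat -> option (Seq * nat)) (n : nat) : list (Seq * nat) :=
  flat_map (fun k => match c k with Some C => [C] | None => [] end) (seq 0 n).

Lemma sumL_somes : forall s f g c n,
  sumL (somes c n) (fun C => cyl_weight s f g (fst C) (snd C)) = fsum (fun k => piece_weight s f g (c k)) n.
Proof.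
  intros. unfold somes. rewrite sumL_flat_map, sumL_seq. apply fsum_ext. intros k _.
  destruct (c k) as [[v t]|]; simpl; ring.
Qed.

Lemma in_somes : forall c n k C, (k < n)%nat -> c k = Some C -> In C (somes c n).
Proof.
  intros. unfold somes. apply in_flat_map. exists k. split. apply in_seq; lia. rewrite H0; simpl; auto.
Qed.

Lemma geom : forall n, fsum (fun k => (/2) ^ (S k)) n = 1 - (/2) ^ n.
Proof. induction n. simpl; ring. cbn [fsum]. rewrite IHn. simpl. field. Qed.

Lemma NULL1 : forall s f g (A : nat -> Seq -> Prop), (forall k, meas s f g (A k) = 0) ->
  meas s f g (fun x => exists k, A k x) = 0.
Proof.
  intros s f g A HA. apply Rle_antisym; [|apply meas_nonneg].
  apply Rle_plus_epsilon. intros d Hd. rewrite Rplus_0_l.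
  assert (Hc : forall k, exists c : nat -> option (Seq * nat),
     (forall x, A k x -> exists j, in_piece (c j) x) /\
     exists Sm, infinite_sum (fun j => piece_weight s f g (c j)) Sm /\ Sm < d * (/2) ^ (S k)).
  { intros k. apply NNPP. intros Hn.
    assert (d * (/2) ^ (S k) <= meas s f g (A k)).
    { apply meas_ge_lb. intros Sm [c [Hc Hs]]. apply Rnot_lt_le. intros Hlt. apply Hn. exists c. split; eauto. }
    rewrite HA in H. assert (0 < d * (/2) ^ (S k)). apply Rmult_lt_0_compat; auto. apply pow_lt; lra. lra. }
  set (cc := fun k => proj1_sig (constructive_indefinite_description _ (Hc k))).
  assert (Hcc : forall k, (forall x, A k x -> exists j, in_piece (cc k j) x) /\
     exists Sm, infinite_sum (fun j => piece_weight s f g (cc k j)) Sm /\ Sm < d * (/2) ^ (S k)).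
  { intros k. unfold cc. apply (proj2_sig (constructive_indefinite_description _ (Hc k))). }
  clearbody cc. clear Hc.
  set (G := fun x m => exists k j v t, cc k j = Some (v, t) /\ (t <= m)%nat /\ in_cyl v t x).
  assert (HPD : PD G).
  { intros w w' m Hag [k [j [v [t [H1 [H2 H3]]]]]]. exists k, j, v, t. repeat split; auto.
    intros n Hn. rewrite <- (Hag n) by lia. auto. }
  assert (Hb : forall N, fsum (fun n => piece_weight s f g (anti G n)) N <= d).
  { intros N.
    destruct (bound_fin (fun n K => forall v m, anti G n = Some (v, m) -> exists k j v' t,
        (k < K)%nat /\ (j < K)%nat /\ cc k j = Some (v', t) /\ (t <= m)%nat /\ in_cyl v' t v) N)
      as [K HK].
    { intros n K K' Hle HQ v m Hv. destruct (HQ v m Hv) as [k [j [v' [t [H1 [H2 [H3 [H4 H5]]]]]]]].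
      exists k, j, v', t. repeat split; auto; lia. }
    { intros n Hn. destruct (anti G n) as [[v m]|] eqn:E.
      - pose proof (anti_good G n v m HPD E v (fun _ _ => eq_refl)) as [k [j [v' [t [H1 [H2 H3]]]]]].
        exists (S (Nat.max k j)). intros v0 m0 E0. inversion E0; subst.
        exists k, j, v', t. repeat split; auto; lia.
      - exists 0%nat. intros; discriminate. }
    set (Cs := flat_map (fun k => somes (cc k) K) (seq 0 K)).
    eapply Rle_trans. apply (fin_bound s f g (anti G) N Cs).
    - intros n n' x _ _ Hne H1 H2. eapply anti_disj; eauto.
    - intros n v m Hn E. destruct (HK n Hn v m E) as [k [j [v' [t [Hk [Hj [Ec [Ht Hc]]]]]]]].
      exists (v', t). split.
      + unfold Cs. apply in_flat_map. exists k. split. apply in_seq; lia. eapply in_somes; eauto.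
      + intros x Hx i Hi. simpl in *. rewrite Hx by lia. apply Hc; lia.
    - unfold Cs. rewrite sumL_flat_map, sumL_seq.
      eapply Rle_trans. apply fsum_le. intros k _. rewrite sumL_somes.
      destruct (Hcc k) as [_ [Sm [HS HSl]]].
      eapply Rle_trans. apply (isum_partial _ _ (fun n => pw_nonneg s f g (cc k n)) HS K).
      apply Rlt_le. apply HSl.
      rewrite fsum_scal, geom. assert (0 < (/2) ^ K) by (apply pow_lt; lra). nra. }
  destruct (series_bounded (fun n => piece_weight s f g (anti G n)) d (fun n => pw_nonneg _ _ _ _) Hb)
    as [S [HS HSd]].
  eapply Rle_trans; [|apply HSd]. apply meas_le_cover. exists (anti G). split; auto.
  intros x [k Hx]. apply anti_cover; auto. destruct (proj1 (Hcc k) x Hx) as [j Hj].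
  destruct (cc k j) as [[v t]|] eqn:E; [|destruct Hj]. exists t, k, j, v, t. auto.
Qed.
Lemma key_cover : forall s s' f g al be (Y : Seq -> Prop) S, 0 < al -> 0 <= be ->
  (forall x, Y x -> exists N, forall m, (N <= m)%nat ->
      al * cyl_weight s f g x m <= be * cyl_weight s' f g x m) ->
  cover_sums s' f g Y S -> al * meas s f g Y <= be * S.
Proof.
  intros s s' f g al be Y S Hal Hbe HY [c [Hcov Hsum]].
  set (G := fun x m => (exists k v t, c k = Some (v, t) /\ (t <= m)%nat /\ in_cyl v t x) /\
                       al * cyl_weight s f g x m <= be * cyl_weight s' f g x m).
  assert (HPD : PD G).
  { intros w w' m Hag [[k [v [t [H1 [H2 H3]]]]] H4]. split.
    - exists k, v, t. repeat split; auto. intros n Hn. rewrite <- (Hag n) by lia. auto.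
    - rewrite <- !(cw_agree _ f g w w' m Hag). auto. }
  assert (Hb : forall N, fsum (fun n => piece_weight s f g (anti G n)) N <= be * S / al).
  { intros N.
    destruct (bound_fin (fun n K => forall v m, anti G n = Some (v, m) -> exists k v' t,
        (k < K)%nat /\ c k = Some (v', t) /\ (t <= m)%nat /\ in_cyl v' t v) N)
      as [K HK].
    { intros n K K' Hle HQ v m Hv. destruct (HQ v m Hv) as [k [v' [t [H1 [H2 [H3 H4]]]]]].
      exists k, v', t. repeat split; auto; lia. }
    { intros n Hn. destruct (anti G n) as [[v m]|] eqn:E.
      - pose proof (anti_good G n v m HPD E v (fun _ _ => eq_refl)) as [[k [v' [t [H1 [H2 H3]]]]] _].
        exists (Datatypes.S k). intros v0 m0 E0. inversion E0; subst.
        exists k, v', t. repeat split; auto; lia.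
      - exists 0%nat. intros; discriminate. }
    assert (H1 : fsum (fun n => piece_weight s' f g (anti G n)) N <= S).
    { eapply Rle_trans. apply (fin_bound s' f g (anti G) N (somes c K)).
      - intros n n' x _ _ Hne H1 H2. eapply anti_disj; eauto.
      - intros n v m Hn E. destruct (HK n Hn v m E) as [k [v' [t [Hk [Ec [Ht Hc]]]]]].
        exists (v', t). split.
        + eapply in_somes; eauto.
        + intros x Hx i Hi. simpl in *. rewrite Hx by lia. apply Hc; lia.
      - rewrite sumL_somes. destruct K as [|K]. simpl. eapply cover_nonneg; exists c; eauto.
        apply (isum_partial _ _ (fun n => pw_nonneg s' f g (c n)) Hsum). }
    assert (H2 : al * fsum (fun n => piece_weight s f g (anti G n)) N <=
                 be * fsum (fun n => piece_weight s' f g (anti G n)) N).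
    { rewrite <- !fsum_scal. apply fsum_le. intros n _.
      destruct (anti G n) as [[v m]|] eqn:E; simpl.
      - apply (anti_good G n v m HPD E v (fun _ _ => eq_refl)).
      - lra. }
    apply (Rmult_le_reg_l al); auto. replace (al * (be * S / al)) with (be * S) by (field; lra).
    eapply Rle_trans; [apply H2|]. apply Rmult_le_compat_l; auto. }
  destruct (series_bounded _ _ (fun n => pw_nonneg s f g (anti G n)) Hb) as [S'' [HS HSb]].
  assert (meas s f g Y <= S'').
  { apply meas_le_cover. exists (anti G). split; auto.
    intros x Hx. apply anti_cover; auto. destruct (Hcov x Hx) as [k Hk].
    destruct (c k) as [[v t]|] eqn:E; [|destruct Hk]. destruct (HY x Hx) as [N HN].
    exists (Nat.max t N). split. exists k, v, t. repeat split; auto; lia. apply HN; lia. }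
  apply (Rmult_le_reg_r (/ al)). apply Rinv_0_lt_compat; auto.
  replace (al * meas s f g Y * / al) with (meas s f g Y) by (field; lra).
  unfold Rdiv in HSb. lra.
Qed.

Lemma key : forall s s' f g al be (Y : Seq -> Prop), 0 <= al -> 0 <= be ->
  (forall x, Y x -> exists N, forall m, (N <= m)%nat ->
      al * cyl_weight s f g x m <= be * cyl_weight s' f g x m) ->
  al * meas s f g Y <= be * meas s' f g Y.
Proof.
  intros s s' f g al be Y Hal Hbe HY.
  destruct (Req_dec al 0) as [H0|H0].
  { subst. rewrite Rmult_0_l. apply Rmult_le_pos; auto. apply meas_nonneg. }
  assert (Hal' : 0 < al) by lra.
  assert (HC : forall S, cover_sums s' f g Y S -> al * meas s f g Y <= be * S).
  { intros; eapply key_cover; eauto. }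
  destruct (Req_dec be 0) as [Hb0|Hb0].
  { subst. destruct (cover_exists s' f g Y) as [S HS]. specialize (HC S HS). rewrite Rmult_0_l in *. auto. }
  assert (al * meas s f g Y / be <= meas s' f g Y).
  { apply meas_ge_lb. intros S HS. specialize (HC S HS).
    apply (Rmult_le_reg_l be); [lra|]. replace (be * (al * meas s f g Y / be)) with (al * meas s f g Y) by (field; lra).
    auto. }
  apply (Rmult_le_reg_l (/ be)). apply Rinv_0_lt_compat; lra.
  replace (/ be * (be * meas s' f g Y)) with (meas s' f g Y) by (field; lra).
  unfold Rdiv in H. lra.
Qed.
Lemma meas_empty_set : measurable (fun _ : Seq => False).
Proof.
  apply (meas_ext (fun x => ~ in_cyl (fun _ => false) 0 x)).
  - intros x; split; [intros H; apply H; intros n Hn; lia| tauto].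
  - apply meas_compl, meas_cyl.
Qed.

Lemma meas_full_set : measurable (fun _ : Seq => True).
Proof.
  apply (meas_ext (fun x => ~ False)). tauto. apply meas_compl, meas_empty_set.
Qed.

Lemma meas_prefix : forall t (P : Seq -> Prop), (forall w w', agree t w w' -> P w -> P w') -> measurable P.
Proof.
  intros t P H. apply (meas_ext (fun x => exists k, P (decode k) /\ in_cyl (decode k) t x)).
  - intros x; split.
    + intros [k [Hk Hc]]. eapply H; [|apply Hk]. intros n Hn. symmetry; apply Hc; auto.
    + intros Hx. destruct (code_exists t x) as [k [_ [_ Hb]]]. exists k. split.
      * eapply H; [|apply Hx]. intros n Hn. unfold decode. symmetry; auto.
      * intros n Hn. unfold decode. rewrite Hb; auto.
  - apply meas_union. intros k. destruct (classic (P (decode k))).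
    + apply (meas_ext (in_cyl (decode k) t)). tauto. apply meas_cyl.
    + apply (meas_ext (fun _ => False)). tauto. apply meas_empty_set.
Qed.

Lemma meas_inter : forall A B, measurable A -> measurable B -> measurable (fun x => A x /\ B x).
Proof.
  intros A B HA HB.
  apply (meas_ext (fun x => ~ exists k, (match k with O => fun x => ~ A x | S _ => fun x => ~ B x end) x)).
  - intros x; split.
    + intros H. split; apply NNPP; intros Hn; apply H; [exists 0%nat|exists 1%nat]; auto.
    + intros [Ha Hb] [[|k] Hk]; auto.
  - apply meas_compl, meas_union. intros [|k]; apply meas_compl; auto.
Qed.

Lemma meas_forall : forall (A : nat -> Seq -> Prop), (forall n, measurable (A n)) -> measurable (fun x => forall n, A n x).
Proof.
  intros A HA. apply (meas_ext (fun x => ~ exists n, ~ A n x)).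
  - intros x; split.
    + intros H n. apply NNPP; intros Hn; apply H; eauto.
    + intros H [n Hn]; auto.
  - apply meas_compl, meas_union. intros n; apply meas_compl; auto.
Qed.

Lemma meas_ev : forall (P : nat -> Seq -> Prop), (forall n, measurable (P n)) ->
  measurable (fun x => exists N, forall n, (N <= n)%nat -> P n x).
Proof.
  intros P HP. apply meas_union. intros N. apply meas_forall. intros n.
  destruct (Compare_dec.le_dec N n).
  - apply (meas_ext (P n)). tauto. auto.
  - apply (meas_ext (fun _ => True)). intros x; split; [intros _ H; lia|auto]. apply meas_full_set.
Qed.

Lemma Tval_agree : forall T f g w w' n, agree n w w' -> Tval T f g w n = Tval T f g w' n.
Proof. intros; unfold Tval; rewrite (play_agree f g w w' n); auto. Qed.

Definition evle (u : nat -> R) (a : R) : Prop := exists N, forall n, (N <= n)%nat -> u n <= a.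
Definition evge (u : nat -> R) (b : R) : Prop := exists N, forall n, (N <= n)%nat -> b <= u n.

Lemma meas_evle : forall T f g a, measurable (fun x => evle (Tval T f g x) a).
Proof.
  intros. apply meas_ev. intros n. apply (meas_prefix n). intros w w' H Hw. rewrite <- (Tval_agree T f g w w' n H); auto.
Qed.

Lemma meas_evge : forall T f g a, measurable (fun x => evge (Tval T f g x) a).
Proof.
  intros. apply meas_ev. intros n. apply (meas_prefix n). intros w w' H Hw. rewrite <- (Tval_agree T f g w w' n H); auto.
Qed.

Lemma D_val : forall f g w m, Tval Dtest f g w (S m) =
  (if Rlt_dec 0 (cyl_weight true f g w m) then
     cyl_weight true f g w m / (cyl_weight true f g w m + cyl_weight false f g w m)
   else if Rlt_dec 0 (cyl_weight false f g w m) then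
     cyl_weight true f g w m / (cyl_weight true f g w m + cyl_weight false f g w m)
   else 1/2).
Proof.
  intros. unfold Tval, Dtest. cbn [play].
  replace (firstn m (play f g w m ++ _)) with (play f g w m). reflexivity.
  rewrite firstn_app, play_length, Nat.sub_diag. simpl firstn. rewrite app_nil_r.
  rewrite firstn_all2; auto. rewrite play_length; lia.
Qed.

Lemma frac_range : forall x y, 0 <= x -> 0 <= y -> 0 < x + y -> 0 <= x / (x + y) <= 1.
Proof.
  intros x y Hx Hy Hs. unfold Rdiv. split.
  - apply Rmult_le_pos; [lra| left; apply Rinv_0_lt_compat; lra].
  - rewrite <- (Rinv_r (x+y)) by lra. apply Rmult_le_compat_r; [left; apply Rinv_0_lt_compat|]; lra.
Qed.

Lemma D_range : forall f g w n, 0 <= Tval Dtest f g w n <= 1.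
Proof.
  intros f g w [|m].
  - unfold Tval, Dtest. lra.
  - rewrite D_val. pose proof (cw_nonneg true f g w m). pose proof (cw_nonneg false f g w m).
    destruct (Rlt_dec _ _); [apply frac_range; lra|]. destruct (Rlt_dec _ _); [apply frac_range; lra|]. lra.
Qed.

Lemma D_ge : forall f g w m b, b <= Tval Dtest f g w (S m) ->
  b * cyl_weight false f g w m <= (1 - b) * cyl_weight true f g w m.
Proof.
  intros f g w m b. rewrite D_val. pose proof (cw_nonneg true f g w m). pose proof (cw_nonneg false f g w m).
  set (pf := cyl_weight true f g w m) in *. set (pg := cyl_weight false f g w m) in *.
  destruct (Rlt_dec 0 pf).
  - intros Hb. assert (pf / (pf + pg) * (pf + pg) = pf) by (field; lra). nra.
  - destruct (Rlt_dec 0 pg).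
    + assert (pf = 0) by lra. rewrite H1. unfold Rdiv. rewrite Rmult_0_l. intros. nra.
    + assert (pf = 0) by lra. assert (pg = 0) by lra. rewrite H1, H2. intros; lra.
Qed.

Lemma D_le : forall f g w m a, Tval Dtest f g w (S m) <= a ->
  (1 - a) * cyl_weight true f g w m <= a * cyl_weight false f g w m.
Proof.
  intros f g w m a. rewrite D_val. pose proof (cw_nonneg true f g w m). pose proof (cw_nonneg false f g w m).
  set (pf := cyl_weight true f g w m) in *. set (pg := cyl_weight false f g w m) in *.
  destruct (Rlt_dec 0 pf).
  - intros Hb. assert (pf / (pf + pg) * (pf + pg) = pf) by (field; lra). nra.
  - destruct (Rlt_dec 0 pg).
    + assert (pf = 0) by lra. rewrite H1. unfold Rdiv. rewrite Rmult_0_l. intros. nra.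
    + assert (pf = 0) by lra. assert (pg = 0) by lra. rewrite H1, H2. intros; lra.
Qed.

Lemma evge_D : forall f g x b, evge (Tval Dtest f g x) b -> exists N, forall m, (N <= m)%nat ->
  b * cyl_weight false f g x m <= (1 - b) * cyl_weight true f g x m.
Proof. intros f g x b [N HN]. exists N. intros m Hm. apply D_ge, HN. lia. Qed.

Lemma evle_D : forall f g x a, evle (Tval Dtest f g x) a -> exists N, forall m, (N <= m)%nat ->
  (1 - a) * cyl_weight true f g x m <= a * cyl_weight false f g x m.
Proof. intros f g x a [N HN]. exists N. intros m Hm. apply D_le, HN. lia. Qed.

Lemma ev_of_lt : forall u l a, Un_cv u l -> l < a -> evle u a.
Proof.
  intros u l a H Hl. destruct (H (a - l)) as [N HN]. lra. exists N. intros n Hn.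
  specialize (HN n Hn). unfold Rdist in HN. apply Rabs_def2 in HN. lra.
Qed.

Lemma ev_of_gt : forall u l b, Un_cv u l -> b < l -> evge u b.
Proof.
  intros u l b H Hl. destruct (H (l - b)) as [N HN]. lra. exists N. intros n Hn.
  specialize (HN n Hn). unfold Rdist in HN. apply Rabs_def2 in HN. lra.
Qed.

Lemma T_lim_range : forall T f g w l, is_test T -> has_lim T f g w l -> 0 <= l <= 1.
Proof.
  intros T f g w l HT Hl. split.
  - apply (cv_ev_ge _ _ _ 1%nat Hl). intros n Hn. apply (HT n _). lia.
  - apply (cv_ev_le _ _ _ 1%nat Hl). intros n Hn. apply (HT n _). lia.
Qed.

Lemma D_lim_range : forall f g w l, has_lim Dtest f g w l -> 0 <= l <= 1.
Proof.
  intros f g w l Hl. split.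
  - apply (cv_ge _ _ _ Hl). intros n. apply D_range.
  - apply (cv_le _ _ _ Hl). intros n. apply D_range.
Qed.
Definition Xs (T : Test) f g a b (x : Seq) : Prop :=
  exists l l', has_lim T f g x l /\ has_lim Dtest f g x l' /\ l < a /\ b < l'.
Definition Ys (T : Test) f g a b (x : Seq) : Prop :=
  exists l l', has_lim T f g x l /\ has_lim Dtest f g x l' /\ l' < a /\ b < l.

Lemma pos_of_nonneg : forall r, 0 <= r -> r <> 0 -> 0 < r.
Proof. intros; lra. Qed.

Lemma X_null : forall T f g a b, is_test T -> reasonable T -> error_free T -> a < b ->
  meas true f g (Xs T f g a b) = 0 /\ meas false f g (Xs T f g a b) = 0.
Proof.
  intros T f g a b HT Hre EF Hab.
  destruct (classic (exists x, Xs T f g a b x)) as [[x0 [l0 [l0' [Hl0 [Hl0' [Ha0 Hb0]]]]]]|Hn].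
  2: { split; apply meas_empty; intros x Hx; apply Hn; eauto. }
  pose proof (T_lim_range _ _ _ _ _ HT Hl0). pose proof (D_lim_range _ _ _ _ Hl0').
  destruct (Rlt_le_dec (1/2) b) as [Hb|Hb].
  - set (A := fun x => evle (Tval T f g x) a /\ evge (Tval Dtest f g x) b).
    assert (HA : measurable A) by (apply meas_inter; [apply meas_evle|apply meas_evge]).
    assert (HXA : forall x, Xs T f g a b x -> A x).
    { intros x [l [l' [Hl [Hl' [Ha Hb']]]]]. split; [eapply ev_of_lt|eapply ev_of_gt]; eauto. }
    assert (Hk : b * meas false f g A <= (1 - b) * meas true f g A).
    { apply key; try lra. intros x [_ Hx]. apply evge_D; auto. }
    set (eps := (Rmax a (1/2) + b) / 2).
    assert (He1 : 1/2 < eps) by (pose proof (Rmax_r a (1/2)); unfold eps; lra).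
    assert (He2 : a < eps) by (pose proof (Rmax_l a (1/2)); unfold eps; lra).
    assert (He3 : eps < b) by (assert (Rmax a (1/2) < b) by (apply Rmax_lub_lt; lra); unfold eps; lra).
    pose proof (meas_nonneg true f g A) as Hm1. pose proof (meas_nonneg false f g A) as Hm2.
    assert (HmA : meas true f g A = 0).
    { apply NNPP. intros Hne. assert (Hpos : 0 < meas true f g A) by lra.
      destruct (Hre f g A HA) as [_ HL].
      assert (Hlt : meas false f g A < (1 - eps) / eps * meas true f g A).
      { assert (eps * meas false f g A < (1 - eps) * meas true f g A).
        { apply (Rmult_lt_reg_l b); [lra|]. nra. }
        apply (Rmult_lt_reg_l eps); [lra|].
        replace (eps * ((1 - eps) / eps * meas true f g A)) with ((1 - eps) * meas true f g A) by (field; lra).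
        lra. }
      specialize (HL eps ltac:(lra) Hpos Hlt).
      rewrite meas_empty in HL. lra.
      intros x [[Hx _] [l [Hl Hl2]]]. destruct Hx as [N HN].
      pose proof (cv_ev_le _ _ _ N Hl HN). lra. }
    assert (HnA : meas false f g A = 0).
    { rewrite HmA in Hk. assert (b * meas false f g A <= 0) by lra.
      apply NNPP; intros Hne. assert (0 < b * meas false f g A) by (apply Rmult_lt_0_compat; lra). lra. }
    split; apply Rle_antisym; try apply meas_nonneg.
    + rewrite <- HmA. apply meas_mono; auto.
    + rewrite <- HnA. apply meas_mono; auto.
  - set (A := fun x => evge (Tval Dtest f g x) b).
    assert (HA : measurable A) by apply meas_evge.
    set (eps := (a + b) / 2).
    set (Z := fun x => A x /\ Defs.Rset T f g eps x).
    assert (HXZ : forall x, Xs T f g a b x -> Z x).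
    { intros x [l [l' [Hl [Hl' [Ha Hb']]]]]. split; [eapply ev_of_gt; eauto|].
      exists l; split; auto. unfold eps; lra. }
    destruct (EF f g A HA) as [HR _].
    specialize (HR eps ltac:(unfold eps; lra)). fold Z in HR.
    assert (Hk : b * meas false f g Z <= (1 - b) * meas true f g Z).
    { apply key; try lra. intros x [Hx _]. apply evge_D; auto. }
    pose proof (meas_nonneg true f g Z) as Hm1. pose proof (meas_nonneg false f g Z) as Hm2.
    assert (H1 : (1 - eps) * meas true f g Z <= eps * meas false f g Z).
    { apply (Rmult_le_compat_l (1 - eps)) in HR; [|unfold eps; lra].
      replace ((1 - eps) * (eps / (1 - eps) * meas false f g Z)) with (eps * meas false f g Z) in HR
        by (field; unfold eps; lra). auto. }
    assert (H2 : (1 - eps) * (b * meas false f g Z) <= (1 - eps) * ((1 - b) * meas true f g Z))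
      by (apply Rmult_le_compat_l; unfold eps; lra).
    assert (H3 : (1 - b) * ((1 - eps) * meas true f g Z) <= (1 - b) * (eps * meas false f g Z))
      by (apply Rmult_le_compat_l; lra).
    assert (H4 : (b - eps) * meas false f g Z <= 0) by lra.
    assert (HnZ : meas false f g Z = 0).
    { apply NNPP; intros Hne. assert (0 < (b - eps) * meas false f g Z)
        by (apply Rmult_lt_0_compat; unfold eps in *; lra). lra. }
    assert (HmZ : meas true f g Z = 0).
    { rewrite HnZ, Rmult_0_r in HR. lra. }
    split; apply Rle_antisym; try apply meas_nonneg.
    + rewrite <- HmZ. apply meas_mono; auto.
    + rewrite <- HnZ. apply meas_mono; auto.
Qed.

Lemma Y_null : forall T f g a b, is_test T -> reasonable T -> error_free T -> a < b ->
  meas true f g (Ys T f g a b) = 0 /\ meas false f g (Ys T f g a b) = 0.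
Proof.
  intros T f g a b HT Hre EF Hab.
  destruct (classic (exists x, Ys T f g a b x)) as [[x0 [l0 [l0' [Hl0 [Hl0' [Ha0 Hb0]]]]]]|Hn].
  2: { split; apply meas_empty; intros x Hx; apply Hn; eauto. }
  pose proof (T_lim_range _ _ _ _ _ HT Hl0). pose proof (D_lim_range _ _ _ _ Hl0').
  destruct (Rlt_le_dec a (1/2)) as [Ha|Ha].
  - set (A := fun x => evle (Tval Dtest f g x) a /\ evge (Tval T f g x) b).
    assert (HA : measurable A) by (apply meas_inter; [apply meas_evle|apply meas_evge]).
    assert (HYA : forall x, Ys T f g a b x -> A x).
    { intros x [l [l' [Hl [Hl' [Ha' Hb']]]]]. split; [eapply ev_of_lt|eapply ev_of_gt]; eauto. }
    assert (Hk : (1 - a) * meas true f g A <= a * meas false f g A).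
    { apply key; try lra. intros x [Hx _]. apply evle_D; auto. }
    set (eps := (a + Rmin b (1/2)) / 2).
    assert (He1 : eps < 1/2) by (pose proof (Rmin_r b (1/2)); unfold eps; lra).
    assert (He2 : eps < b) by (pose proof (Rmin_l b (1/2)); unfold eps; lra).
    assert (He3 : a < eps) by (assert (a < Rmin b (1/2)) by (apply Rmin_glb_lt; lra); unfold eps; lra).
    pose proof (meas_nonneg true f g A) as Hm1. pose proof (meas_nonneg false f g A) as Hm2.
    assert (HnA : meas false f g A = 0).
    { apply NNPP. intros Hne. assert (Hpos : 0 < meas false f g A) by lra.
      destruct (Hre f g A HA) as [HR _].
      assert (Hlt : meas true f g A < eps / (1 - eps) * meas false f g A).
      { assert ((1 - eps) * meas true f g A < eps * meas false f g A).
        { apply (Rmult_lt_reg_l (1 - a)); [lra|]. nra. }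
        apply (Rmult_lt_reg_l (1 - eps)); [lra|].
        replace ((1 - eps) * (eps / (1 - eps) * meas false f g A)) with (eps * meas false f g A) by (field; lra).
        lra. }
      specialize (HR eps ltac:(lra) Hpos Hlt).
      rewrite meas_empty in HR. lra.
      intros x [[_ Hx] [l [Hl Hl2]]]. destruct Hx as [N HN].
      pose proof (cv_ev_ge _ _ _ N Hl HN). lra. }
    assert (HmA : meas true f g A = 0).
    { rewrite HnA in Hk. assert ((1 - a) * meas true f g A <= 0) by lra.
      apply NNPP; intros Hne. assert (0 < (1 - a) * meas true f g A) by (apply Rmult_lt_0_compat; lra). lra. }
    split; apply Rle_antisym; try apply meas_nonneg.
    + rewrite <- HmA. apply meas_mono; auto.
    + rewrite <- HnA. apply meas_mono; auto.
  - set (A := fun x => evle (Tval Dtest f g x) a).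
    assert (HA : measurable A) by apply meas_evle.
    set (eps := (a + b) / 2).
    set (Z := fun x => A x /\ Lset T f g eps x).
    assert (HYZ : forall x, Ys T f g a b x -> Z x).
    { intros x [l [l' [Hl [Hl' [Ha' Hb']]]]]. split; [eapply ev_of_lt; eauto|].
      exists l; split; auto. unfold eps; lra. }
    destruct (EF f g A HA) as [_ HL].
    specialize (HL eps ltac:(unfold eps; lra)). fold Z in HL.
    assert (Hk : (1 - a) * meas true f g Z <= a * meas false f g Z).
    { apply key; try lra. intros x [Hx _]. apply evle_D; auto. }
    pose proof (meas_nonneg true f g Z) as Hm1. pose proof (meas_nonneg false f g Z) as Hm2.
    assert (H1 : eps * meas false f g Z <= (1 - eps) * meas true f g Z).
    { apply (Rmult_le_compat_l eps) in HL; [|unfold eps; lra].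
      replace (eps * ((1 - eps) / eps * meas true f g Z)) with ((1 - eps) * meas true f g Z) in HL
        by (field; unfold eps; lra). auto. }
    assert (H2 : eps * ((1 - a) * meas true f g Z) <= eps * (a * meas false f g Z))
      by (apply Rmult_le_compat_l; unfold eps; lra).
    assert (H3 : a * (eps * meas false f g Z) <= a * ((1 - eps) * meas true f g Z))
      by (apply Rmult_le_compat_l; lra).
    assert (H4 : (eps - a) * meas true f g Z <= 0) by lra.
    assert (HmZ : meas true f g Z = 0).
    { apply NNPP; intros Hne. assert (0 < (eps - a) * meas true f g Z)
        by (apply Rmult_lt_0_compat; unfold eps in *; lra). lra. }
    assert (HnZ : meas false f g Z = 0).
    { rewrite HmZ, Rmult_0_r in HL. lra. }
    split; apply Rle_antisym; try apply meas_nonneg.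
    + rewrite <- HmZ. apply meas_mono; auto.
    + rewrite <- HnZ. apply meas_mono; auto.
Qed.
Lemma floor_ex : forall d p, 0 < d -> 0 <= p -> exists i : nat, INR i * d <= p < INR (S i) * d.
Proof.
  intros d p Hd Hp.
  assert (HM : exists M : nat, p < INR M * d).
  { destruct (archimed_cor1 (d / (p + 1))) as [M [HM HM0]].
    { apply Rdiv_lt_0_compat; lra. }
    exists M. assert (0 < INR M) by (apply lt_0_INR; lia).
    assert (p + 1 < INR M * d).
    { apply (Rmult_lt_compat_l (INR M * (p + 1))) in HM; [|nra].
      replace (INR M * (p + 1) * / INR M) with (p + 1) in HM by (field; lra).
      replace (INR M * (p + 1) * (d / (p + 1))) with (INR M * d) in HM by (field; lra). lra. }
    lra. }
  destruct HM as [M HM]. induction M.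
  - simpl in HM. lra.
  - destruct (Rlt_or_le p (INR M * d)) as [H|H]; auto. exists M; split; auto.
Qed.

Definition ga (i j : nat) : R := INR (S i) / INR (S j).
Definition gb (i j : nat) : R := INR (S (S i)) / INR (S j).

Lemma ga_lt_gb : forall i j, ga i j < gb i j.
Proof.
  intros. unfold ga, gb. unfold Rdiv. apply Rmult_lt_compat_r.
  apply Rinv_0_lt_compat, lt_0_INR; lia. apply lt_INR; lia.
Qed.

Lemma grid : forall p q, 0 <= p -> p < q -> exists i j, p < ga i j /\ gb i j < q.
Proof.
  intros p q Hp Hpq.
  destruct (archimed_cor1 ((q - p) / 2)) as [n [Hn Hn0]]. lra.
  destruct n as [|j]; [lia|].
  set (d := / INR (S j)).
  assert (Hd : 0 < d) by (apply Rinv_0_lt_compat, lt_0_INR; lia).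
  destruct (floor_ex d p Hd Hp) as [i [Hi1 Hi2]].
  exists i, j. unfold ga, gb. unfold Rdiv. fold d. split. lra.
  rewrite !S_INR. rewrite S_INR in Hi2. fold d in Hn. nra.
Qed.

Theorem mainTheorem7 (T : Test) (HT : is_test T) (Han : anonymous T)
  (Hre : reasonable T) (Hne : ~ equiv T Dtest) : ~ error_free T.
Proof.
  intros EF. apply Hne. intros f g.
  assert (HXY : forall s i j, meas s f g (fun x => Xs T f g (ga i j) (gb i j) x \/ Ys T f g (ga i j) (gb i j) x) = 0).
  { intros s i j. apply Rle_antisym; [|apply meas_nonneg].
    rewrite <- (NULL1 s f g (fun k => match k with O => Xs T f g (ga i j) (gb i j)
                                          | S _ => Ys T f g (ga i j) (gb i j) end)).
    - apply meas_mono. intros x [Hx|Hx]; [exists 0%nat|exists 1%nat]; auto.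
    - intros [|k]; destruct s.
      + apply X_null; auto. apply ga_lt_gb.
      + apply X_null; auto. apply ga_lt_gb.
      + apply Y_null; auto. apply ga_lt_gb.
      + apply Y_null; auto. apply ga_lt_gb. }
  assert (Hall : forall s, meas s f g (fun x => exists i, exists j,
     Xs T f g (ga i j) (gb i j) x \/ Ys T f g (ga i j) (gb i j) x) = 0).
  { intros s. apply NULL1. intros i. apply NULL1. intros j. apply HXY. }
  assert (Hsub : forall s, meas s f g (fun w => exists l l', has_lim T f g w l /\ has_lim Dtest f g w l' /\ l <> l') = 0).
  { intros s. apply Rle_antisym; [|apply meas_nonneg]. rewrite <- (Hall s). apply meas_mono.
    intros x [l [l' [Hl [Hl' Hne']]]].
    pose proof (T_lim_range _ _ _ _ _ HT Hl). pose proof (D_lim_range _ _ _ _ Hl').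
    destruct (Rlt_or_le l l') as [Hlt|Hle].
    - destruct (grid l l') as [i [j [H1 H2]]]; try lra. exists i, j. left. exists l, l'. auto.
    - destruct (grid l' l) as [i [j [H1 H2]]]; try lra. exists i, j. right. exists l, l'. repeat split; auto. }
  split; apply Hsub.
Qed.
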